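(* For every $\mu$ in the upper half-plane, \[J_{\frac{2\mu+1}{2}}\!\left(e^{\pi i\mu}\right)=J_{2\mu}\!\left(e^{\pi i\mu}\right)-J_{2\mu}\!\left(-e^{\pi i\mu}\right).\]
   Context: Let $J(z)=\log|z|\log|1-z|$ and $B_3(x)=x^3-\frac32x^2+\frac12x$. For $\sigma$ in the upper half-plane, with $Q=e^{2\pi i\sigma}$, and $z\in\mathbb{C}^*$ not in $Q^{\mathbb{Z}}$, define \[J_\sigma(z)=\sum_{n=0}^\infty J(zQ^n)-\sum_{n=1}^\infty J(z^{-1}Q^n)+\frac13\log^2|Q|\,B_3\!\left(\frac{\log|z|}{\log|Q|}\right).\] *)

(* Defs.v *)
From Stdlib Require Import Reals.
From Coquelicot Require Import Coquelicot.
Open Scope R_scope.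

Definition Cexp (w : C) : C :=
  (exp (Re w) * cos (Im w), exp (Re w) * sin (Im w)).

Fixpoint Cpow (z : C) (n : nat) : C :=
  match n with
  | O => 1%C
  | S m => Cmult z (Cpow z m)
  end.

Definition Jf (z : C) : R := ln (Cmod z) * ln (Cmod (Cminus 1 z)).

Definition B3 (x : R) : R := x ^ 3 - 3 / 2 * x ^ 2 + 1 / 2 * x.

Definition Qof (sigma : C) : C := Cexp (Cmult (Cmult (RtoC (2 * PI)) Ci) sigma).

Definition Jsig (sigma z : C) : R :=
  let Q := Qof sigma in
  Series (fun n => Jf (Cmult z (Cpow Q n)))
  - Series (fun n => Jf (Cmult (Cinv z) (Cpow Q (S n))))
  + 1 / 3 * (ln (Cmod Q)) ^ 2 * B3 (ln (Cmod z) / ln (Cmod Q)).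

(* Main.v *)
Require Import Defs.
From Stdlib Require Import Reals Lra Lia.
From Coquelicot Require Import Coquelicot.
Open Scope R_scope.

Lemma split_series (f : nat -> R) :
  ex_series (fun n => f (2 * n)%nat) -> ex_series (fun n => f (2 * n + 1)%nat) ->
  Series f = Series (fun n => f (2 * n)%nat) + Series (fun n => f (2 * n + 1)%nat).
Proof.
  intros [l1 H1] [l2 H2].
  rewrite (is_series_unique _ _ H1), (is_series_unique _ _ H2).
  apply is_series_unique.
  assert (P1 : is_pseries (fun n => f (2 * n)%nat) (1 ^ 2) l1).
  { unfold is_pseries. eapply is_series_ext; [|exact H1]. intros n.
    rewrite pow_n_pow, !pow1. symmetry; exact (scal_one _). }
  assert (P2 : is_pseries (fun n => f (2 * n + 1)%nat) (1 ^ 2) l2).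
  { unfold is_pseries. eapply is_series_ext; [|exact H2]. intros n.
    rewrite pow_n_pow, !pow1. symmetry; exact (scal_one _). }
  pose proof (is_pseries_odd_even f 1 l1 l2 P1 P2) as P.
  unfold is_pseries in P. replace (l1 + l2) with (l1 + 1 * l2) by ring.
  eapply is_series_ext; [|exact P]. intros n.
  cbv beta. rewrite pow_n_pow, !pow1. exact (scal_one _).
Qed.

Lemma ln_bound (t y : R) : 0 <= t < 1 -> 1 - t <= y <= 1 + t -> Rabs (ln y) <= t / (1 - t).
Proof.
  intros Ht Hy. apply Rabs_le.
  assert (Hy0 : 0 < y) by lra.
  assert (E1 := exp_ineq1_le (ln y)). rewrite exp_ln in E1 by lra.
  assert (Hp : 0 < 1 - t) by lra.
  assert (E2 := exp_ineq1_le (ln (/ (1 - t)))). rewrite exp_ln in E2 by (apply Rinv_0_lt_compat; lra).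
  rewrite ln_Rinv in E2 by lra.
  assert (E3 : ln (1 - t) <= ln y) by (apply ln_le; lra).
  assert (Q : t <= t / (1 - t)).
  { apply (Rmult_le_reg_r (1 - t)); [lra|]. field_simplify; nra. }
  assert (Q2 : / (1 - t) - 1 = t / (1 - t)) by (field; lra).
  split; lra.
Qed.

Lemma Jf_bound (w : C) (r : R) (m : nat) : 0 < r < 1 -> (1 <= m)%nat -> Cmod w = r ^ m ->
  Rabs (Jf w) <= (- ln r) / (1 - r) * (INR m * r ^ m).
Proof.
  intros Hr Hm Hw. unfold Jf. rewrite Hw, ln_pow by lra.
  assert (Hrm : r ^ m <= r).
  { destruct m as [|k]; [lia|]. simpl. assert (r ^ k <= 1) by (rewrite <- (pow1 k); apply pow_incr; lra). nra. }
  assert (Hrm0 : 0 < r ^ m) by (apply pow_lt; lra).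
  assert (Hb : Rabs (ln (Cmod (Cminus 1 w))) <= r ^ m / (1 - r ^ m)).
  { apply ln_bound; [lra|]. split.
    - assert (T := Cmod_triangle (Cminus 1 w) w).
      replace (Cminus 1 w + w)%C with (RtoC 1) in T by (unfold Cminus; ring).
      rewrite Cmod_1 in T. lra.
    - assert (T := Cmod_triangle 1 (- w)). unfold Cminus. rewrite Cmod_1, Cmod_opp in T. lra. }
  assert (Hb2 : r ^ m / (1 - r ^ m) <= r ^ m / (1 - r)).
  { apply Rmult_le_compat_l; [lra|]. apply Rinv_le_contravar; lra. }
  assert (Hl : ln r < 0) by (rewrite <- ln_1; apply ln_increasing; lra).
  rewrite Rabs_mult, Rabs_mult, Rabs_pos_eq by (apply pos_INR).
  rewrite Rabs_left by lra.
  assert (HI : 0 <= INR m) by apply pos_INR.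
  assert (X : Rabs (ln (Cmod (Cminus 1 w))) <= r ^ m / (1 - r)) by lra.
  unfold Rdiv in *.
  assert (0 <= INR m * - ln r) by nra.
  replace (- ln r * / (1 - r) * (INR m * r ^ m)) with (INR m * - ln r * (r ^ m * / (1 - r))) by ring.
  apply Rmult_le_compat_l; [nra|lra].
Qed.

Lemma bernoulli (h : R) (n : nat) : 0 <= h -> 1 + INR n * h <= (1 + h) ^ n.
Proof.
  intros Hh. induction n as [|n IH]; [simpl; lra|].
  rewrite S_INR. change ((1 + h) ^ (S n)) with ((1 + h) * (1 + h) ^ n). assert (0 <= INR n) by apply pos_INR. nra.
Qed.

Lemma npow_bound (r : R) (n : nat) : 0 < r < 1 ->
  INR n * r ^ n <= (2 * r / (1 - r)) * ((1 + r) / 2) ^ n.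
Proof.
  intros Hr. set (s := (1 + r) / 2). set (h := (1 - r) / (2 * r)).
  assert (Hs : 0 < s) by (unfold s; lra).
  assert (Hh : 0 < h) by (unfold h; apply Rdiv_lt_0_compat; lra).
  set (t := r / s).
  assert (Ht : t * (1 + h) = 1) by (unfold t, s, h; field; lra).
  assert (Ht0 : 0 <= t) by (unfold t; apply Rlt_le, Rdiv_lt_0_compat; lra).
  replace r with (t * s) at 1 by (unfold t; field; lra).
  rewrite Rpow_mult_distr.
  assert (B := bernoulli h n (Rlt_le _ _ Hh)).
  assert (E : t ^ n * (1 + h) ^ n = 1) by (rewrite <- Rpow_mult_distr, Ht; apply pow1).
  assert (Htn : 0 <= t ^ n) by (apply pow_le; lra).
  assert (K : INR n * t ^ n <= / h).
  { apply (Rmult_le_reg_r h); [lra|]. rewrite Rinv_l by lra.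
    assert (0 <= INR n) by apply pos_INR. nra. }
  replace (2 * r / (1 - r)) with (/ h) by (unfold h; field; lra).
  assert (0 <= s ^ n) by (apply pow_le; lra).
  replace (INR n * (t ^ n * s ^ n)) with ((INR n * t ^ n) * s ^ n) by ring.
  apply Rmult_le_compat_r; lra.
Qed.
Lemma Cmod_Cpow (z : C) (n : nat) : Cmod (Defs.Cpow z n) = Cmod z ^ n.
Proof. induction n as [|n IH]; simpl; [apply Cmod_1|]. rewrite Cmod_mult, IH. ring. Qed.

Lemma ex_J (z eps : C) (j : nat) : 0 < Cmod z < 1 -> Cmod eps = 1 -> (1 <= j)%nat ->
  ex_series (fun k => Jf (Cmult eps (Defs.Cpow z (4 * k + j)))).
Proof.
  intros Hz He Hj. set (r := Cmod z) in *.
  set (K := - ln r / (1 - r)). set (C0 := 2 * r / (1 - r)). set (s := (1 + r) / 2).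
  assert (HK : 0 <= K).
  { unfold K. assert (ln r < 0) by (rewrite <- ln_1; apply ln_increasing; lra).
    apply Rmult_le_pos; [lra|]. apply Rlt_le, Rinv_0_lt_compat; lra. }
  apply (@ex_series_le R_AbsRing R_CompleteNormedModule _ (fun k => (K * C0 * s ^ j) * (s ^ 4) ^ k)).
  - intros k. change (norm (Jf (Cmult eps (Defs.Cpow z (4 * k + j))))) with (Rabs (Jf (Cmult eps (Defs.Cpow z (4 * k + j))))).
    eapply Rle_trans.
    + apply (Jf_bound _ r (4 * k + j)); [lra|lia|].
      rewrite Cmod_mult, He, Cmod_Cpow. apply Rmult_1_l.
    + change (- ln r / (1 - r)) with K.
      replace (K * C0 * s ^ j * (s ^ 4) ^ k) with (K * (C0 * s ^ (4 * k + j)))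
        by (rewrite pow_add, pow_mult; ring).
      apply Rmult_le_compat_l; [exact HK|]. apply npow_bound; lra.
  - apply (ex_series_ext (fun n => scal (K * C0 * s ^ j) ((s ^ 4) ^ n))); [reflexivity|].
    apply (@ex_series_scal_l R_AbsRing R_NormedModule), ex_series_geom.
    assert (0 < s < 1) by (unfold s; lra).
    rewrite Rabs_pos_eq by (apply pow_le; lra).
    destruct (pow_lt_1_compat s 4) as [_ X]; [lra|lia|exact X].
Qed.
Open Scope C_scope.
Lemma Cpow_add (x : C) (a b : nat) : Defs.Cpow x (a + b) = Defs.Cpow x a * Defs.Cpow x b.
Proof. induction a as [|a IH]; simpl; [ring|]. rewrite IH. ring. Qed.
Lemma Cpow_mul (x : C) (a b : nat) : Defs.Cpow x (a * b) = Defs.Cpow (Defs.Cpow x a) b.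
Proof.
  induction b as [|b IH]; simpl.
  - rewrite Nat.mul_0_r. reflexivity.
  - replace (a * S b)%nat with (a + a * b)%nat by lia. rewrite Cpow_add, IH. reflexivity.
Qed.
Lemma Cpow_Cmult (x y : C) (n : nat) : Defs.Cpow (x * y) n = Defs.Cpow x n * Defs.Cpow y n.
Proof. induction n as [|n IH]; simpl; [ring|]. rewrite IH. ring. Qed.
Lemma Cpow_m1_even (k : nat) : Defs.Cpow (-1) (2 * k) = 1.
Proof. rewrite Cpow_mul. simpl. replace (-1 * (-1 * 1)) with (RtoC 1) by ring.
  induction k; simpl; [reflexivity|]. rewrite IHk. ring. Qed.
Lemma Cpow_negsq (z : C) (m : nat) : Defs.Cpow (- (z * z)) m = Defs.Cpow (-1) m * Defs.Cpow z (2 * m).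
Proof. replace (- (z * z)) with (-1 * Defs.Cpow z 2) by (simpl; ring).
  rewrite Cpow_Cmult, Cpow_mul. reflexivity. Qed.
Lemma Cpow4 (z : C) (k b : nat) : Defs.Cpow z (4 * k + b) = Defs.Cpow (Defs.Cpow z 4) k * Defs.Cpow z b.
Proof. rewrite Cpow_add, Cpow_mul. reflexivity. Qed.

Section E.
Variable z : C.
Hypothesis Hz : z <> 0.
Lemma E1 k : z * Defs.Cpow (- (z * z)) (2 * k) = Defs.Cpow z (4 * k + 1).
Proof. rewrite Cpow_negsq, Cpow_m1_even, Cpow4. replace (2 * (2 * k))%nat with (4 * k + 0)%nat by lia.
  rewrite Cpow4. simpl. ring. Qed.
Lemma E2 k : z * Defs.Cpow (- (z * z)) (2 * k + 1) = - Defs.Cpow z (4 * k + 3).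
Proof. rewrite Cpow_negsq, Cpow_add, Cpow_m1_even, Cpow4. replace (2 * (2 * k + 1))%nat with (4 * k + 2)%nat by lia.
  rewrite Cpow4. simpl. ring. Qed.
Lemma E3 k : / z * Defs.Cpow (- (z * z)) (S (2 * k)) = - Defs.Cpow z (4 * k + 1).
Proof. replace (S (2 * k)) with (2 * k + 1)%nat by lia.
  rewrite Cpow_negsq, Cpow_add, Cpow_m1_even, Cpow4. replace (2 * (2 * k + 1))%nat with (4 * k + 2)%nat by lia.
  rewrite Cpow4. simpl. field. exact Hz. Qed.
Lemma E4 k : / z * Defs.Cpow (- (z * z)) (S (2 * k + 1)) = Defs.Cpow z (4 * k + 3).
Proof. replace (S (2 * k + 1)) with (2 * (k + 1))%nat by lia.
  rewrite Cpow_negsq, Cpow_m1_even, Cpow4. replace (2 * (2 * (k + 1)))%nat with (4 * k + 4)%nat by lia.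
  rewrite Cpow4. simpl. field. exact Hz. Qed.
Lemma E5 n : z * Defs.Cpow (Defs.Cpow z 4) n = Defs.Cpow z (4 * n + 1).
Proof. rewrite Cpow4. simpl. ring. Qed.
Lemma E6 n : / z * Defs.Cpow (Defs.Cpow z 4) (S n) = Defs.Cpow z (4 * n + 3).
Proof. rewrite Cpow4. simpl. field. exact Hz. Qed.
Lemma E7 n : - z * Defs.Cpow (Defs.Cpow z 4) n = - Defs.Cpow z (4 * n + 1).
Proof. rewrite Cpow4. simpl. ring. Qed.
Lemma E8 n : / (- z) * Defs.Cpow (Defs.Cpow z 4) (S n) = - Defs.Cpow z (4 * n + 3).
Proof. rewrite Cpow4. simpl. field. exact Hz. Qed.
End E.
Close Scope C_scope.
Lemma main_abs (s1 s2 z : C) : 0 < Cmod z < 1 ->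
  Qof s1 = Copp (Cmult z z) -> Qof s2 = Defs.Cpow z 4 ->
  Jsig s1 z = Jsig s2 z - Jsig s2 (Copp z).
Proof.
  intros Hz H1 H2.
  assert (Hz0 : z <> 0%C) by (intros E; rewrite E, Cmod_0 in Hz; lra).
  assert (A1 : forall j, (1 <= j)%nat -> ex_series (fun k => Jf (Defs.Cpow z (4 * k + j)))).
  { intros j Hj. eapply ex_series_ext; [|apply (ex_J z 1 j Hz Cmod_1 Hj)].
    intros k; simpl. f_equal. ring. }
  assert (A2 : forall j, (1 <= j)%nat -> ex_series (fun k => Jf (Copp (Defs.Cpow z (4 * k + j))))).
  { intros j Hj. eapply ex_series_ext; [|apply (ex_J z (Copp 1) j Hz)].
    - intros k; simpl. f_equal. ring.
    - rewrite Cmod_opp. apply Cmod_1.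
    - exact Hj. }
  unfold Jsig. rewrite H1, H2, !Cmod_opp.
  rewrite (split_series (fun n => Jf (Cmult z (Defs.Cpow (Copp (Cmult z z)) n)))).
  2: { eapply ex_series_ext; [|apply (A1 1%nat); lia]. intros k; cbv beta; rewrite E1; auto. }
  2: { eapply ex_series_ext; [|apply (A2 3%nat); lia]. intros k; cbv beta; rewrite E2; auto. }
  rewrite (split_series (fun n => Jf (Cmult (Cinv z) (Defs.Cpow (Copp (Cmult z z)) (S n))))).
  2: { eapply ex_series_ext; [|apply (A2 1%nat); lia]. intros k; cbv beta; rewrite E3; auto. }
  2: { eapply ex_series_ext; [|apply (A1 3%nat); lia]. intros k; cbv beta; rewrite E4; auto. }
  rewrite (Series_ext (fun n => Jf (Cmult z (Defs.Cpow (Copp (Cmult z z)) (2 * n))))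
            (fun k => Jf (Defs.Cpow z (4 * k + 1)))) by (intros; rewrite E1; auto).
  rewrite (Series_ext (fun n => Jf (Cmult z (Defs.Cpow (Copp (Cmult z z)) (2 * n + 1))))
            (fun k => Jf (Copp (Defs.Cpow z (4 * k + 3))))) by (intros; rewrite E2; auto).
  rewrite (Series_ext (fun n => Jf (Cmult (Cinv z) (Defs.Cpow (Copp (Cmult z z)) (S (2 * n)))))
            (fun k => Jf (Copp (Defs.Cpow z (4 * k + 1))))) by (intros; rewrite E3; auto).
  rewrite (Series_ext (fun n => Jf (Cmult (Cinv z) (Defs.Cpow (Copp (Cmult z z)) (S (2 * n + 1)))))
            (fun k => Jf (Defs.Cpow z (4 * k + 3)))) by (intros; rewrite E4; auto).
  rewrite (Series_ext (fun n => Jf (Cmult z (Defs.Cpow (Defs.Cpow z 4) n)))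
            (fun k => Jf (Defs.Cpow z (4 * k + 1)))) by (intros; rewrite E5; auto).
  rewrite (Series_ext (fun n => Jf (Cmult (Cinv z) (Defs.Cpow (Defs.Cpow z 4) (S n))))
            (fun k => Jf (Defs.Cpow z (4 * k + 3)))) by (intros; rewrite E6; auto).
  rewrite (Series_ext (fun n => Jf (Cmult (Copp z) (Defs.Cpow (Defs.Cpow z 4) n)))
            (fun k => Jf (Copp (Defs.Cpow z (4 * k + 1))))) by (intros; rewrite E7; auto).
  rewrite (Series_ext (fun n => Jf (Cmult (Cinv (Copp z)) (Defs.Cpow (Defs.Cpow z 4) (S n))))
            (fun k => Jf (Copp (Defs.Cpow z (4 * k + 3))))) by (intros; rewrite E8; auto).
  assert (B : 1 / 3 * ln (Cmod (Cmult z z)) ^ 2 * B3 (ln (Cmod z) / ln (Cmod (Cmult z z))) = 0).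
  { rewrite Cmod_mult, ln_mult by lra.
    assert (ln (Cmod z) < 0) by (rewrite <- ln_1; apply ln_increasing; lra).
    replace (ln (Cmod z) / (ln (Cmod z) + ln (Cmod z))) with (1 / 2) by (field; lra).
    unfold B3. simpl. field. }
  rewrite B. ring.
Qed.
Lemma Cexp_add (a b : C) : Cexp (Cplus a b) = Cmult (Cexp a) (Cexp b).
Proof.
  destruct a as [a1 a2], b as [b1 b2]. unfold Cexp, Cplus, Cmult; simpl.
  rewrite exp_plus, cos_plus, sin_plus. f_equal; ring.
Qed.

Lemma Cmod_Cexp (w : C) : Cmod (Cexp w) = exp (Re w).
Proof.
  unfold Cmod.
  replace (fst (Cexp w) ^ 2 + snd (Cexp w) ^ 2) with (exp (Re w) ^ 2).
  - apply sqrt_pow2. left; apply exp_pos.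
  - pose proof (sin2_cos2 (Im w)) as H; unfold Rsqr in H.
    transitivity (exp (Re w) ^ 2 * (sin (Im w) * sin (Im w) + cos (Im w) * cos (Im w))).
    + rewrite H; ring.
    + unfold Cexp; simpl. ring.
Qed.

Theorem mainTheorem16 (mu : C) (Hmu : 0 < Im mu) :
  let z := Cexp (Cmult (Cmult (RtoC PI) Ci) mu) in
  Jsig (Cdiv (Cplus (Cmult (RtoC 2) mu) 1) (RtoC 2)) z
  = Jsig (Cmult (RtoC 2) mu) z - Jsig (Cmult (RtoC 2) mu) (Copp z).
Proof.
  intros z. set (w := Cmult (Cmult (RtoC PI) Ci) mu) in z.
  apply main_abs.
  - unfold z. rewrite Cmod_Cexp.
    assert (Re w = - (PI * Im mu)) by (unfold w; destruct mu; simpl; ring).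
    rewrite H. split; [apply exp_pos|]. rewrite <- exp_0. apply exp_increasing.
    assert (0 < PI * Im mu) by (apply Rmult_lt_0_compat; [apply PI_RGT_0|exact Hmu]). lra.
  - unfold Qof.
    replace (Cmult (Cmult (RtoC (2 * PI)) Ci) (Cdiv (Cplus (Cmult (RtoC 2) mu) 1) (RtoC 2)))
      with (Cplus (Cplus w w) (0, PI)).
    + rewrite !Cexp_add. unfold z.
      replace (Cexp (0, PI)) with (Copp 1).
      * ring.
      * unfold Cexp; simpl. rewrite exp_0, cos_PI, sin_PI. unfold Copp, RtoC; simpl. f_equal; ring.
    + unfold w; destruct mu as [a b]. unfold Cdiv, Cinv, Cplus, Cmult, RtoC, Ci; simpl.
      f_equal; field.
  - unfold Qof.
    replace (Cmult (Cmult (RtoC (2 * PI)) Ci) (Cmult (RtoC 2) mu))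
      with (Cplus w (Cplus w (Cplus w w))).
    + rewrite !Cexp_add. unfold z. simpl. ring.
    + unfold w; destruct mu as [a b]. unfold Cplus, Cmult, RtoC, Ci; simpl.
      f_equal; ring.
Qed.
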